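(* Let $t \geq 2$ and $n \geq 1$ be integers and let $x = \left[\frac{nt-1}{t-1}\right]$. Then $x \leq R_{t-1,t}(K_{1,n}) \leq x+1$. Moreover, if $x$ is even, then $R_{t-1,t}(K_{1,n}) = x+1$.
   Context: $[a]$ denotes the integer part (floor) of a real number $a$. $K_{1,n}$ is the star with $n$ edges. For a graph $G$ and integers $1 \leq s < t$, $R_{s,t}(G)$ is the smallest positive integer $N$ such that every coloring of the edges of the complete graph $K_N$ with $t$ colors contains a (not necessarily induced) subgraph isomorphic to $G$ whose edges use at most $s$ distinct colors. *)

(* Defs.v *)
From mathcomp Require Import all_boot.
Set Implicit Arguments. Unset Strict Implicit. Unset Printing Implicit Defensive.

(* An edge t-colouring of K_N: a colour in 'I_t for every 2-subset {u,v}
   of 'I_N (values on other subsets are irrelevant). *)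
Definition edge_colouring (N t : nat) := {set 'I_N} -> 'I_t.

Definition colours_used (V : finType) (e : rel V) (N t : nat)
  (c : edge_colouring N t) (f : V -> 'I_N) : {set 'I_t} :=
  [set c [set f u; f v] | u in V, v in V & e u v].

Definition ramsey_prop (s t : nat) (V : finType) (e : rel V) (N : nat) : Prop :=
  forall c : edge_colouring N t,
    exists f : V -> 'I_N, injective f /\ #|colours_used e c f| <= s.

Definition is_Rst (s t : nat) (V : finType) (e : rel V) (R : nat) : Prop :=
  0 < R /\ ramsey_prop s t e R /\
  forall M, 0 < M -> ramsey_prop s t e M -> R <= M.

Definition star_rel (n : nat) : rel 'I_n.+1 :=
  fun u v => (u == ord0) != (v == ord0).

(* Main.v *)
Require Import Defs.
From mathcomp Require Import all_boot.
From mathcomp Require Import zify.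
From Stdlib Require Classical_Prop.
Set Implicit Arguments. Unset Strict Implicit.

Definition lab (m a b : nat) : nat :=
  if (a < m) && (b < m) then (a + b) %% m else (2 * minn a b) %% m.

Lemma lab_sym m a b : lab m a b = lab m b a.
Proof. by rewrite /lab andbC addnC minnC. Qed.

Lemma mod2_inj m a b : odd m -> a < m -> b < m ->
  (2 * a) %% m = (2 * b) %% m -> a = b.
Proof.
move=> om am bm H.
have h2 : (uphalf m).*2 = m.+1 by rewrite odd_uphalfK.
have key : forall y, y < m -> y = (uphalf m * ((2 * y) %% m)) %% m.
  move=> y ym.
  rewrite modnMmr.
  have -> : uphalf m * (2 * y) = y * m + y.
    by rewrite mulnA muln2 h2 mulSn addnC mulnC.
  by rewrite modnMDl modn_small.
by rewrite (key a am) (key b bm) H.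
Qed.

Lemma lab_inj m v w w' : odd m -> v <= m -> w <= m -> w' <= m ->
  w != v -> w' != v -> lab m v w = lab m v w' -> w = w'.
Proof.
move=> om vm wm w'm wv w'v; rewrite /lab.
case: (ltnP v m) => hv; case: (ltnP w m) => hw; case: (ltnP w' m) => hw' /=.
- move/eqP; rewrite eqn_modDl => /eqP.
  by rewrite !modn_small.
- have ew' : w' = m by apply: anti_leq; rewrite w'm hw'.
  rewrite ew' (minn_idPl (ltnW hv)) mul2n -addnn => /eqP.
  rewrite eqn_modDl !modn_small // => /eqP E; by rewrite E eqxx in wv.
- have ew : w = m by apply: anti_leq; rewrite wm hw.
  rewrite ew (minn_idPl (ltnW hv)) mul2n -addnn => /esym /eqP.
  rewrite eqn_modDl !modn_small // => /eqP E; by rewrite E eqxx in w'v.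
- by move=> _; apply/eqP; rewrite eqn_leq (leq_trans wm hw') (leq_trans w'm hw).
- have ev : v = m by apply: anti_leq; rewrite vm hv.
  rewrite ev (minn_idPr (ltnW hw)) (minn_idPr (ltnW hw')).
  exact: mod2_inj.
- have ev : v = m by apply: anti_leq; rewrite vm hv.
  have ew' : w' = m by apply: anti_leq; rewrite w'm hw'.
  by subst; rewrite eqxx in w'v.
- have ev : v = m by apply: anti_leq; rewrite vm hv.
  have ew : w = m by apply: anti_leq; rewrite wm hw.
  by subst; rewrite eqxx in wv.
- by move=> _; apply/eqP; rewrite eqn_leq (leq_trans wm hw') (leq_trans w'm hw).
Qed.

Lemma set2_eq (T : finType) (a b c d : T) : a != b ->
  [set a; b] = [set c; d] -> (a = c /\ b = d) \/ (a = d /\ b = c).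
Proof.
move=> ab H; move: (set21 a b) (set22 a b); rewrite H !in_set2.
case/orP=> /eqP ea; case/orP=> /eqP eb; subst.
- by rewrite eqxx in ab.
- by left.
- by right.
- by rewrite eqxx in ab.
Qed.

Lemma lab_lt m a b : 0 < m -> lab m a b < m.
Proof. by move=> m0; rewrite /lab; case: ifP => _; rewrite ltn_pmod. Qed.

Lemma inj_bound n k (F : 'I_n -> nat) :
  injective F -> (forall i, F i < k) -> n <= k.
Proof.
move=> Finj HF.
pose G := fun i => Ordinal (HF i).
have Ginj : injective G by move=> a b /(congr1 val) /= /Finj.
by have := leq_card G Ginj; rewrite !card_ord.
Qed.

Lemma bad (n t' N : nat) : 0 < n -> ~~ odd N -> n < N -> t'.+1 * (N - n) <= N.-1 ->
  ~ ramsey_prop t' t'.+1 (@star_rel n) N.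
Proof.
move=> n0; case: N => [|m] // eN nN hq.
have om : odd m by move: eN; rewrite /= negbK.
have m0 : 0 < m by case: m om {eN nN hq}.
set q := m.+1 - n in hq.
have q0 : 0 < q by rewrite subn_gt0.
pose g := fun k : nat => (inord (minn (k %/ q) t') : 'I_t'.+1).
pose col := fun S : {set 'I_m.+1} =>
  if [pick p : 'I_m.+1 * 'I_m.+1 | S == [set p.1; p.2]] is Some p
  then g (lab m p.1 p.2) else ord0.
have col2 : forall a b : 'I_m.+1, a != b -> col [set a; b] = g (lab m a b).
  move=> a b ab; rewrite /col; case: pickP => [p /eqP Hp | H].
    by case: (set2_eq ab Hp) => [[-> ->]|[-> ->]] //; rewrite lab_sym.
  by move: (H (a, b)); rewrite /= eqxx.
move=> H; have [f [finj fc]] := H col.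
set A := colours_used (@star_rel n) col f in fc.
have [c cA] : exists c, c \notin A.
  case: (pickP (fun c => c \notin A)) => [c hc | H0]; first by exists c.
  have : [set: 'I_t'.+1] \subset A.
    by apply/subsetP => c _; apply/negbFE; exact: H0.
  move/subset_leq_card; rewrite cardsT card_ord => h.
  by have := leq_trans h fc; rewrite ltnn.
pose w := fun i : 'I_n => f (lift ord0 i).
have wne : forall i, w i != f ord0.
  move=> i; apply/negP => /eqP /finj E.
  by have := neq_lift ord0 i; rewrite E eqxx.
have wne' : forall i, (w i : nat) != f ord0 by move=> i; exact: (wne i).
pose F := fun i => lab m (f ord0) (w i).
have Finj : injective F.
  move=> i j E; apply: (@lift_inj _ ord0); apply: finj; apply: val_inj.
  by apply: (lab_inj om _ _ _ (wne' i) (wne' j) E); rewrite -ltnS; exact: ltn_ord.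
have FgC : forall i, g (F i) != c.
  move=> i; have hin : col [set f ord0; w i] \in A.
    apply/imset2P; exists ord0 (lift ord0 i) => //.
    by rewrite inE /star_rel eqxx.
  rewrite -col2; last by rewrite eq_sym wne.
  by apply/eqP => E; move: cA; rewrite -E hin.
have hc : c * q + q <= m.
  have := ltn_ord c; rewrite ltnS => hc.
  apply: leq_trans hq; rewrite addnC -mulSn; exact: leq_mul (ltn_ord c) (leqnn q).
have Fout : forall i, ~~ ((c * q <= F i) && (F i < c * q + q)).
  move=> i; apply/negP => /andP [h1 h2]; move/negP: (FgC i); apply.
  have dq : F i %/ q = c.
    apply/eqP; rewrite eqn_leq -ltnS ltn_divLR // leq_divRL // h1 andbT.
    by rewrite mulSn addnC.
  rewrite /g dq (minn_idPl _); last by rewrite -ltnS ltn_ord.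
  by apply/eqP; apply: val_inj; rewrite /= inordK.
pose G := fun i => if F i < c * q then F i else F i - q.
have FL : forall i, F i < m by move=> i; exact: lab_lt.
have Ginj : injective G.
  move=> i j E; apply: Finj; move: E; rewrite /G; move: (Fout i) (Fout j) (FL i) (FL j).
  move: (F i) (F j) (c * q) hc => a b p hp.
  case: (ltnP a p); case: (ltnP b p) => /=; lia.
have GL : forall i, G i < m - q.
  move=> i; rewrite /G; move: (Fout i) (FL i).
  move: (F i) (c * q) hc => a p hp; case: (ltnP a p); lia.
have := inj_bound Ginj GL.
rewrite /q; lia.
Qed.
Lemma mono_ramsey (s t : nat) (V : finType) (e : rel V) (M N : nat) :
  M <= N -> ramsey_prop s t e M -> ramsey_prop s t e N.
Proof.
move=> hMN hM c.
pose c' := fun S : {set 'I_M} => c (widen_ord hMN @: S).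
have [f [finj fc]] := hM c'.
exists (widen_ord hMN \o f); split.
  by move=> a b /(congr1 val) /= /val_inj /finj.
apply: leq_trans fc; apply: subset_leq_card; apply/subsetP => z.
case/imset2P => u w hu hw ->.
apply/imset2P; exists u w => //.
by rewrite /c' /= imsetU1 imset_set1.
Qed.
Lemma trivial_bad (n t N : nat) : N <= n -> ~ ramsey_prop t t.+1 (@star_rel n) N.
Proof.
move=> hN H; have [f [finj _]] := H (fun _ => ord0).
by have := leq_card f finj; rewrite !card_ord; lia.
Qed.
Lemma sum_neq (T : finType) (a : T) k :
  \sum_(x : T) (if x != a then k else 0) = #|T|.-1 * k.
Proof.
rewrite -big_mkcond /= -(cardC1 a) -sum_nat_const.
by apply: eq_bigl => x; rewrite !inE.
Qed.

Lemma good n t' N : 0 < n -> 0 < N -> t'.+1 * (n - 1) < (N - 1) * t' ->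
  ramsey_prop t' t'.+1 (@star_rel n) N.
Proof.
move=> n0; case: N => [|N'] // _ hN c.
pose v : 'I_N'.+1 := ord0.
pose col := fun u => c [set v; u].
pose S := fun c0 : 'I_t'.+1 => [set u | (u != v) && (c0 != col u)].
have [c0 Hc0] : exists c0, n <= #|S c0|.
  case: (boolP [exists c0, n <= #|S c0|]) => [/existsP // | /existsPn H].
  exfalso.
  have h1 : \sum_(c1 : 'I_t'.+1) #|S c1| <= t'.+1 * (n - 1).
    apply: leq_trans (_ : \sum_(c1 : 'I_t'.+1) (n - 1) <= _).
      apply: leq_sum => c1 _; move: (H c1); rewrite -ltnNge; lia.
    by rewrite sum_nat_const card_ord.
  have h2 : \sum_(c1 : 'I_t'.+1) #|S c1| = N' * t'.
    transitivity (\sum_(c1 : 'I_t'.+1) \sum_(u : 'I_N'.+1)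
                   (if (u != v) && (c1 != col u) then 1 else 0)).
      apply: eq_bigr => c1 _; rewrite -sum1_card big_mkcond /=.
      by apply: eq_bigr => u _; rewrite inE.
    rewrite exchange_big /=.
    transitivity (\sum_(u : 'I_N'.+1) (if u != v then t' else 0)).
      apply: eq_bigr => u _; case: (u != v) => /=; last by rewrite big1.
      by rewrite sum_neq card_ord muln1.
    by rewrite sum_neq card_ord.
  rewrite h2 in h1; rewrite subn1 /= in hN; lia.
pose g := fun i : 'I_n => (enum_val (widen_ord Hc0 i) : 'I_N'.+1).
have gS : forall i, g i \in S c0 by move=> i; exact: enum_valP.
have gv : forall i, g i != v by move=> i; move: (gS i); rewrite inE => /andP [].
have gc : forall i, c0 != col (g i) by move=> i; move: (gS i); rewrite inE => /andP [].
pose f := fun u : 'I_n.+1 => if unlift ord0 u is Some i then g i else v.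
have f0 : f ord0 = v by rewrite /f unlift_none.
have fl : forall i, f (lift ord0 i) = g i by move=> i; rewrite /f liftK.
exists f; split.
  move=> a b; case: (unliftP ord0 a) => [i ->|->]; case: (unliftP ord0 b) => [j ->|->] //;
    rewrite ?fl ?f0.
  - by move/enum_val_inj/(congr1 val) => /= /val_inj ->.
  - by move=> E; move: (gv i); rewrite E eqxx.
  - by move=> E; move: (gv j); rewrite E eqxx.
apply: leq_trans (_ : #|[set~ c0]| <= t'); last by rewrite cardsC1 card_ord.
apply: subset_leq_card; apply/subsetP => z /imset2P [a b _ hab ->].
rewrite inE /star_rel in hab; rewrite in_setC1.
case: (unliftP ord0 a) hab => [i ->|->]; case: (unliftP ord0 b) => [j ->|->] //=;
  rewrite ?(negbTE (neq_lift _ _)) ?eqxx //= => _; rewrite ?fl ?f0.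
- by rewrite setUC eq_sym (gc i).
- by rewrite eq_sym (gc j).
Qed.

Theorem corollary1 (t n : nat) (ht : 2 <= t) (hn : 1 <= n) :
  let x := (n * t - 1) %/ (t - 1) in
  exists R : nat, is_Rst (t - 1) t (@star_rel n) R /\
    x <= R <= x + 1 /\ (~~ odd x -> R = x + 1).
Proof.
case: t ht => [|t'] // ht.
have t0 : 0 < t' by [].
rewrite [t'.+1 - 1]subn1 /=.
set x := (n * t'.+1 - 1) %/ t'.
have hA : x * t' <= n * t'.+1 - 1 by exact: leq_divM.
have hB : n * t'.+1 - 1 < x.+1 * t' by exact: ltn_ceil.
have hxn : n <= x.
  rewrite /x leq_divRL // mulnS.
  have : 0 < n * t' by rewrite muln_gt0 hn.
  lia.
have badall : forall N, ~~ odd N -> N <= x ->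
    ~ ramsey_prop t' t'.+1 (@star_rel n) N.
  move=> N eN Nx; case: (leqP N n) => hNn; first exact: trivial_bad.
  apply: bad => //.
  have : N * t' <= x * t' by exact: leq_mul.
  rewrite mulnS in hA.
  rewrite mulSn mulnBr.
  nia.
have low : forall M, M < x -> ~ ramsey_prop t' t'.+1 (@star_rel n) M.
  move=> M Mx HM.
  pose N := if odd x then x.-1 else x.
  apply: (badall N).
  - rewrite /N; case: ifP => ox; last by rewrite ox.
    by move: ox; case: (x) => //= y.
  - by rewrite /N; case: ifP => _ //; exact: leq_pred.
  - apply: (mono_ramsey _ HM); rewrite /N; case: ifP => _; lia.
have hgood : ramsey_prop t' t'.+1 (@star_rel n) (x + 1).
  apply: good => //; first by rewrite addn1.
  rewrite addn1 [x.+1 - 1]subn1 /=.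
  rewrite mulnS in hB; rewrite mulSn mulnBr muln1.
  nia.
case: (Classical_Prop.classic (ramsey_prop t' t'.+1 (@star_rel n) x)) => Hx.
- exists x; split; [split; [lia|split => // M M0 HM]|split].
  + by rewrite leqNgt; apply/negP => /low.
  + by rewrite leqnn leq_addr.
  + by move=> ex; case: (badall x ex (leqnn x) Hx).
- exists (x + 1); split; [split; [lia|split => // M M0 HM]|split].
  + rewrite addn1 ltnNge; apply/negP => Mx.
    case: (ltngtP M x) => [hM|hM|hM].
    * exact: (low M hM HM).
    * by move: Mx; rewrite leqNgt hM.
    * by apply: Hx; rewrite -hM.
  + by rewrite leqnn leq_addr.
  + by [].
Qed.
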